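(* Let $R$ be a super-commutative $\mathbb C$-algebra. Any finitely generated subalgebra $A\subset R((t))^{\sqrt{}}$ is contained in $R((t))^{\sqrt{}}_\epsilon$ for some $\epsilon\in\mathbf E$.
   Context: $R((t))^{\sqrt{}}\subset R((t))$ is the subring of Laurent series $\sum_{n\gg-\infty}a_nt^n$ with $a_n$ nilpotent for $n<0$. $\mathbf E$ is the set of sequences $\epsilon=(\epsilon_{-1},\epsilon_{-2},\dots)$ of nonnegative integers with $\epsilon_j=0$ for $j\ll0$. For $\epsilon\in\mathbf E$, $R((t))^{\sqrt{}}_\epsilon=\{\sum_{n\in\mathbb Z}a_nt^n : a_n^{1+\epsilon_n}=0 \text{ for all } n<0\}$. *)

(* Defs.v *)
From HB Require Import structures.
From mathcomp Require Import all_boot all_order all_algebra.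
From mathcomp Require Import complex.
From mathcomp Require Import Rstruct.
Set Implicit Arguments. Unset Strict Implicit. Unset Printing Implicit Defensive.
Import Order.TTheory GRing.Theory Num.Theory.
Local Open Scope ring_scope.

Notation CC := (Rdefinitions.R[i]).

Definition subspace (R : algType CC) (P : R -> Prop) : Prop :=
  [/\ P 0, (forall x y, P x -> P y -> P (x + y)) & (forall (c : CC) x, P x -> P (c *: x))].

Definition super_commutative (R : algType CC) (ev od : R -> Prop) : Prop :=
  [/\ subspace ev, subspace od,
      (forall x, ev x -> od x -> x = 0),
      (forall x, exists a b, [/\ ev a, od b & x = a + b]) &
      [/\ ev 1,
      (forall x y, (ev x -> ev y -> ev (x * y)) /\ (ev x -> od y -> od (x * y)) /\
                   (od x -> ev y -> od (x * y)) /\ (od x -> od y -> ev (x * y)))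
    & (forall x y, (ev x -> (ev y \/ od y) -> x * y = y * x) /\
                   (od x -> od y -> x * y = - (y * x)))]].

(* A formal Laurent series sum_n a_n t^n over R is a coefficient function
   a : int -> R vanishing for n << 0. *)
Definition vanishes_below (R : algType CC) (N : int) (f : int -> R) : Prop :=
  forall n : int, n < N -> f n = 0.

Definition is_laurent (R : algType CC) (f : int -> R) : Prop :=
  exists N : int, vanishes_below N f.

(* Product of two Laurent series both vanishing below N:
   (fg)_n = sum_{i = N}^{n - N} f_i g_{n-i}. *)
Definition lmul (R : algType CC) (N : int) (f g : int -> R) : int -> R :=
  fun n : int => if (N + N <= n)%R then
             \sum_(k < (absz (n - (N + N)%R)%R).+1) f (N + Posz k)%R * g (n - N - Posz k)%R
           else 0.

Definition lconst (R : algType CC) (c : CC) : int -> R :=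
  fun n => if n == 0 then c%:A else 0.

Inductive gen_subalg (R : algType CC) (k : nat) (g : 'I_k -> int -> R) :
    (int -> R) -> Prop :=
  | gen_gen (i : 'I_k) : gen_subalg g (g i)
  | gen_const (c : CC) : gen_subalg g (lconst R c)
  | gen_add f h : gen_subalg g f -> gen_subalg g h ->
      gen_subalg g (fun n => f n + h n)
  | gen_scale (c : CC) f : gen_subalg g f -> gen_subalg g (fun n => c *: f n)
  | gen_mul (N : int) f h : vanishes_below N f -> vanishes_below N h ->
      gen_subalg g f -> gen_subalg g h -> gen_subalg g (lmul N f h).

Definition in_sqrt (R : algType CC) (f : int -> R) : Prop :=
  is_laurent f /\ (forall n : int, n < 0 -> exists m : nat, f n ^+ m = 0).

(* E : sequences eps = (eps_{-1}, eps_{-2}, ...) of naturals, eps_j = 0 for j << 0.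
   Encoded as e : nat -> nat with e k = eps_{-(k+1)}. *)
Definition in_E (e : nat -> nat) : Prop :=
  exists M : nat, forall k : nat, (M <= k)%N -> e k = 0%N.

Definition in_sqrt_eps (R : algType CC) (e : nat -> nat) (f : int -> R) : Prop :=
  forall n : int, n < 0 -> f n ^+ (1 + e (absz n).-1) = 0.

(* Main.v *)
Require Import Defs.
From HB Require Import structures.
From mathcomp Require Import all_boot all_order all_algebra.
From mathcomp Require Import complex.
From mathcomp Require Import Rstruct.
From mathcomp Require Import zify.
Import Order.TTheory GRing.Theory Num.Theory.
Local Open Scope ring_scope.
Set Implicit Arguments. Unset Strict Implicit.

Section NFsec.
Variables (R : algType CC) (I : finType) (s : I -> R).

Definition wprod (w : seq I) : R := \prod_(i <- w) s i.

Inductive NF (j : nat) : R -> Prop :=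
| NF0 : NF j 0
| NFadd x y : NF j x -> NF j y -> NF j (x + y)
| NFw (w : seq I) r : (j <= size w)%N -> NF j (wprod w * r).

Lemma NF_mono i j x : (i <= j)%N -> NF j x -> NF i x.
Proof.
move=> hij; elim=> [|? ? _ ? _ ?|w r hw]; first exact: NF0.
  exact: NFadd.
by apply: NFw; apply: leq_trans hw.
Qed.

Lemma NF_mulr j x r : NF j x -> NF j (x * r).
Proof.
elim=> [|x1 y1 _ h1 _ h2|w r0 hw]; first by rewrite mul0r; exact: NF0.
  by rewrite mulrDl; exact: NFadd.
by rewrite -mulrA; exact: NFw.
Qed.

Lemma NF_any x : NF 0 x.
Proof. have -> : x = wprod [::] * x by rewrite /wprod big_nil mul1r.
exact: NFw. Qed.

Lemma NF_gen i : NF 1 (s i).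
Proof. have -> : s i = wprod [:: i] * 1 by rewrite /wprod big_seq1 mulr1.
exact: NFw. Qed.

Lemma NF_sum j n (F : 'I_n -> R) : (forall i, NF j (F i)) -> NF j (\sum_(i < n) F i).
Proof. move=> h; apply: big_ind => //; [exact: NF0| exact: NFadd]. Qed.

Hypothesis comm : forall i r, exists r', r * s i = s i * r'.

Lemma comm_w w r : exists r', r * wprod w = wprod w * r'.
Proof.
elim: w r => [|i w IH] r; first by exists r; rewrite /wprod big_nil mul1r mulr1.
have [r1 h1] := comm i r; have [r2 h2] := IH r1.
exists r2; rewrite /wprod big_cons -/(wprod w) mulrA h1 -mulrA h2 mulrA //.
Qed.

Lemma NF_mull j x r : NF j x -> NF j (r * x).
Proof.
elim=> [|x1 y1 _ h1 _ h2|w r0 hw]; first by rewrite mulr0; exact: NF0.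
  by rewrite mulrDr; exact: NFadd.
have [r' e] := comm_w w r; rewrite mulrA e -mulrA; exact: NFw.
Qed.

Lemma NF_scale j c x : NF j x -> NF j (c *: x).
Proof. by move=> h; rewrite -[x]mul1r scalerAl; apply: NF_mull. Qed.

Lemma NF_opp j x : NF j x -> NF j (- x).
Proof. by move=> h; rewrite -mulrN1; apply: NF_mulr. Qed.

Lemma NF_mul a b x y : NF a x -> NF b y -> NF (a + b) (x * y).
Proof.
elim=> [|x1 y1 _ h1 _ h2|w r hw] hy; first by rewrite mul0r; exact: NF0.
  by rewrite mulrDl; apply: NFadd; [apply: h1| apply: h2].
elim: hy => [|x1 y1 _ h1 _ h2|w' r' hw']; first by rewrite mulr0; exact: NF0.
  by rewrite mulrDr; exact: NFadd.
have [r2 e] := comm_w w' r.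
have -> : wprod w * r * (wprod w' * r') = wprod (w ++ w') * (r2 * r').
  rewrite /wprod big_cat /= -!/(wprod _) -!mulrA; congr (_ * _).
  by rewrite !mulrA e.
by apply: NFw; rewrite size_cat leq_add.
Qed.

Lemma NF_exp z n : NF 1 z -> NF n (z ^+ n).
Proof.
move=> hz; elim: n => [|n IH]; first exact: NF_any.
by rewrite exprS; have := @NF_mul 1 n _ _ hz IH; rewrite add1n.
Qed.

Variable m : I -> nat.
Hypothesis nil : forall i, s i ^+ m i = 0.

Lemma comm_exp i c r : exists r', r * s i ^+ c = s i ^+ c * r'.
Proof.
elim: c r => [|c IH] r; first by exists r; rewrite expr0 mul1r mulr1.
have [r1 h1] := IH r; have [r2 h2] := comm i r1.
by exists r2; rewrite exprSr mulrA h1 -mulrA h2 mulrA.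
Qed.

Lemma wprod_count i w : exists r, wprod w = s i ^+ (count_mem i w) * r.
Proof.
elim: w => [|j w [r IH]]; first by exists 1; rewrite /wprod big_nil mulr1.
rewrite /wprod big_cons -/(wprod w) IH /=.
case: (eqVneq j i) => [->|nji].
  by exists r; rewrite add1n exprS mulrA.
have [r2 e] := comm_exp i (count_mem i w) (s j).
by exists (r2 * r); rewrite add0n mulrA e mulrA.
Qed.

Lemma size_count w : size w = (\sum_(i : I) count_mem i w)%N.
Proof.
elim: w => [|j w IH]; first by rewrite big1.
rewrite /= big_split /= -IH (bigD1 j) //= eqxx big1 ?addn0 ?add1n // => i /negPf.
by rewrite eq_sym => ->.
Qed.

Lemma wprod0 w : ((\sum_i m i) < size w)%N -> wprod w = 0.
Proof.
move=> hw.
case: (boolP [exists i, m i <= count_mem i w]%N) => [/existsP [i hi]|/existsPn hn].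
  have [r ->] := wprod_count i w.
  by rewrite -(subnK hi) exprD nil mulr0 mul0r.
exfalso; move: hw; rewrite size_count ltnNge leq_sum // => i _.
by apply: ltnW; rewrite ltnNge hn.
Qed.

Lemma NF_zero z : NF (\sum_i m i).+1 z -> z = 0.
Proof.
elim=> [|x y _ -> _ ->|w r hw]; [done | by rewrite addr0 |].
by rewrite wprod0 ?mul0r.
Qed.

End NFsec.

Lemma ceil_sub (L u v : nat) : (0 < L)%N ->
  ((u + v + L.-1) %/ L <= (u + L.-1) %/ L + (v + L.-1) %/ L)%N.
Proof. move=> hL; nia. Qed.

Definition dd (L : nat) (n : int) : nat := if n < 0 then (((absz n) + L.-1) %/ L)%N else 0%N.

Lemma dd_sub L i n : (0 < L)%N -> (dd L n <= dd L i + dd L (n - i))%N.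
Proof.
move=> hL; rewrite /dd; case: (ltrP n 0) => hn //.
case: (ltrP i 0) => hi; case: (ltrP (n - i) 0) => hni.
- have -> : absz n = (absz i + absz (n - i))%N by lia.
  exact: ceil_sub.
- rewrite addn0; apply: leq_div2r; lia.
- rewrite add0n; apply: leq_div2r; lia.
- lia.
Qed.

Lemma dd_sub2 L a x n : (0 < L)%N -> (dd L n <= dd L (a + x) + dd L (n - a - x))%N.
Proof. by move=> hL; have := dd_sub (a + x) n hL; rewrite opprD addrA. Qed.

Lemma dd_ge1 L n : (0 < L)%N -> n < 0 -> (1 <= dd L n)%N.
Proof. move=> hL hn; rewrite /dd hn leq_divRL //; lia. Qed.

Lemma dd_le1 L n : (0 < L)%N -> (absz n <= L)%N -> (dd L n <= 1)%N.
Proof.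
move=> hL hn; rewrite /dd; case: ifP => // _.
by rewrite -ltnS ltn_divLR //; lia.
Qed.

Lemma dd_big L M n : (0 < L)%N -> n < 0 -> (M * L <= absz n)%N -> (M <= dd L n)%N.
Proof. move=> hL hn hM; rewrite /dd hn leq_divRL //; lia. Qed.

Lemma pow_split (R : algType CC) (I : finType) (s : I -> R)
  (comm : forall i r, exists r', r * s i = s i * r') x y n :
  NF s 1 y -> exists z, NF s 1 z /\ (x + y) ^+ n = x ^+ n + z.
Proof.
move=> hy; elim: n => [|n [z [hz e]]]; first by exists 0; split; [exact: NF0|rewrite !expr0 addr0].
exists (x ^+ n * y + z * (x + y)); split.
  apply: NFadd; [exact: NF_mull | exact: NF_mulr].
by rewrite exprSr e exprSr mulrDl mulrDr addrA.
Qed.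

Unset Implicit Arguments.

Theorem proposition4p1p5 (R : algType CC) (ev od : R -> Prop)
    (hR : super_commutative ev od)
    (k : nat) (g : 'I_k -> int -> R)
    (hA : forall f, gen_subalg g f -> in_sqrt f) :
  exists e : nat -> nat, in_E e /\ (forall f, gen_subalg g f -> in_sqrt_eps e f).
Proof.
case: hR => _ _ _ hdec [_ _ hcomm].
have cen : forall x, ev x -> forall r, r * x = x * r.
  move=> x hx r; have [a [b [ha hb ->]]] := hdec r; rewrite mulrDl mulrDr.
  by rewrite (proj1 (hcomm x a) hx (or_introl ha)) (proj1 (hcomm x b) hx (or_intror hb)).
have ocomm : forall y, od y -> forall r, exists r', r * y = y * r'.
  move=> y hy r; have [a [b [ha hb ->]]] := hdec r; exists (a - b).
  rewrite mulrDl mulrBr (proj1 (hcomm a y) ha (or_intror hy)).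
  by rewrite (proj2 (hcomm b y) hb hy).
have osq : forall y, od y -> y ^+ 2 = 0.
  move=> y hy; have h := proj2 (hcomm y y) hy hy.
  have : (2%:R : CC) *: (y * y) = 0 by rewrite scaler_nat mulr2n {1}h addNr.
  by move/eqP; rewrite scaler_eq0 pnatr_eq0 /= expr2 => /eqP.
have [N hN] : exists N : 'I_k -> int, forall i, vanishes_below (N i) (g i).
  apply: (@fin_all_exists _ (fun _ => int) (fun i Ni => vanishes_below Ni (g i))) => i.
  by case: (hA _ (gen_gen g i)).
pose L := (\sum_i `|N i|).+1.
have hL : (0 < L)%N by [].
have hN0 : forall i n, n < - (L%:Z) -> g i n = 0.
  move=> i n hn; apply: hN.
  have : (`|N i| <= \sum_i `|N i|)%N by rewrite (bigD1 i) //= leq_addr.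
  rewrite /L in hn; lia.
pose a (p : 'I_k * 'I_L) := g p.1 (- (Posz (nat_of_ord p.2).+1)).
have [na hna] : exists na : 'I_k * 'I_L -> nat, forall p, a p ^+ na p = 0.
  apply: (@fin_all_exists _ (fun _ => nat) (fun p m => a p ^+ m = 0)) => -[i j]; case: (hA _ (gen_gen g i)) => _ h; apply: h.
  by rewrite oppr_lt0.
have [dec hd] : exists dec : 'I_k * 'I_L -> R * R,
    forall p, [/\ ev (dec p).1, od (dec p).2 & a p = (dec p).1 + (dec p).2].
  apply: (@fin_all_exists _ (fun _ => (R * R)%type)
    (fun p d => [/\ ev d.1, od d.2 & a p = d.1 + d.2])) => p; have [x [y [hx hy e]]] := hdec (a p).
  by exists (x, y).
pose s1 p := (dec p).2.
have comm1 : forall p r, exists r', r * s1 p = s1 p * r'.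
  by move=> p r; apply: ocomm; case: (hd p).
pose m1 (p : 'I_k * 'I_L) := 2%N.
have nil1 : forall p, s1 p ^+ m1 p = 0 by move=> p; apply: osq; case: (hd p).
pose M1 := (\sum_p m1 p).+1.
have evnil : forall p, (dec p).1 ^+ (na p * M1) = 0.
  move=> p; case: (hd p) => _ _ e.
  have [z [hz ez]] := pow_split comm1 ((dec p).1) (na p) (NF_gen s1 p).
  move: ez; rewrite -e hna => /eqP; rewrite eq_sym addr_eq0 => /eqP ex.
  rewrite exprM ex; apply: (NF_zero comm1 nil1); apply: NF_exp => //.
  exact: NF_opp.
pose s2 (q : ('I_k * 'I_L) * bool) := if q.2 then (dec q.1).1 else (dec q.1).2.
pose m2 (q : ('I_k * 'I_L) * bool) := if q.2 then (na q.1 * M1)%N else 2%N.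
have comm2 : forall q r, exists r', r * s2 q = s2 q * r'.
  move=> [p []] r /=; rewrite /s2 /=; case: (hd p) => h1 h2 _.
    by exists r; apply: cen.
  exact: ocomm.
have nil2 : forall q, s2 q ^+ m2 q = 0.
  by move=> [p []]; rewrite /s2 /m2 /=; [apply: evnil | apply: osq; case: (hd p)].
pose M := (\sum_q m2 q).+1.
have claim : forall f, gen_subalg g f -> forall n, NF s2 (dd L n) (f n).
  move=> f; elim.
  - move=> i n; case: (ltrP n 0) => hn; last first.
      by rewrite /dd ltNge hn /=; apply: NF_any.
    case: (ltrP n (- (L%:Z))) => hnL; first by rewrite hN0 //; apply: NF0.
    have hj : ((absz n).-1 < L)%N by lia.
    pose p := (i, Ordinal hj).
    have -> : g i n = a p by rewrite /a /=; congr (g i _); lia.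
    apply: (NF_mono (j := 1)); first by apply: dd_le1 => //; lia.
    case: (hd p) => _ _ ->; apply: NFadd.
      exact: (NF_gen s2 (p, true)).
    exact: (NF_gen s2 (p, false)).
  - move=> c n; rewrite /lconst; case: eqP => [->|_]; last exact: NF0.
    exact: NF_any.
  - by move=> f1 h1 _ IH1 _ IH2 n; apply: NFadd.
  - by move=> c f1 _ IH n; apply: (NF_scale comm2).
  - move=> N' f1 h1 _ _ _ IH1 _ IH2 n; rewrite /lmul; case: ifP => _; last exact: NF0.
    apply: NF_sum => kk.
    apply: (NF_mono (j := (dd L (N' + Posz kk) + dd L (n - N' - Posz kk))%N)).
      exact: dd_sub2.
    exact: (NF_mul comm2).
exists (fun kk => if (kk.+1 < M * L)%N then M.-1 else 0%N); split.
  by exists (M * L)%N => kk hk; case: ifP => //; lia.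
move=> f hf n hn; have H := claim f hf n.
have hnz : (absz n).-1.+1 = absz n by lia.
case: ifP => hlt.
  rewrite add1n /M /=; apply: (NF_zero comm2 nil2); apply: NF_exp => //.
  by apply: (NF_mono (j := dd L n)) => //; apply: dd_ge1.
rewrite addn0 expr1; apply: (NF_zero comm2 nil2).
apply: (NF_mono (j := dd L n)) => //; apply: dd_big => //; lia.
Qed.
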